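(* Let $\mathcal{X}\subset\mathbb{R}^n$ be closed convex, $P$ a probability distribution on a sample space $\mathcal{S}$, and for each $s$ let $f(\cdot;s):\mathbb{R}^n\to\mathbb{R}$ be closed convex and subdifferentiable on $\mathcal{X}$; let $F(x)=\mathbb{E}_P[f(x;S)]$ and $\mathcal{X}^\star=\arg\min_{x\in\mathcal{X}}F(x)$. Assume $F$ is easy to optimize: for each $x^\star\in\mathcal{X}^\star$ and $P$-almost all $s$, $\inf_{x\in\mathcal{X}}f(x;s)=f(x^\star;s)$. Suppose models $f_x(\cdot;s)$ ($x\in\mathcal{X}$, $s\in\mathcal{S}$) satisfy (C.i) $y\mapsto f_x(y;s)$ is convex and subdifferentiable on $\mathcal{X}$; (C.ii) $f_x(x;s)=f(x;s)$ and $f_x(y;s)\le f(y;s)$ for all $y$; (C.iii) $f_x(y;s)\ge\inf_{z\in\mathcal{X}}f(z;s)$ for all $y$ and all $s$. Let $x_1\in\mathcal{X}$, $\alpha_k>0$, $S_1,S_2,\ldots$ i.i.d. $\sim P$, and $x_{k+1}=\arg\min_{x\in\mathcal{X}}\{f_{x_k}(x;S_k)+\frac{1}{2\alpha_k}\|x-x_k\|_2^2\}$. Then for any $x^\star\in\mathcal{X}^\star$, $$\tfrac12\|x_{k+1}-x^\star\|_2^2\le\tfrac12\|x_k-x^\star\|_2^2-\tfrac12[f(x_k;S_k)-f(x^\star;S_k)]\min\left\{\alpha_k,\frac{f(x_k;S_k)-f(x^\star;S_k)}{\|f'(x_k;S_k)\|_2^2}\right\}.$$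
   Context: $f'(x_k;S_k)$ denotes an element of the subdifferential $\partial f(x_k;S_k)$. When $f(x_k;S_k)=f(x^\star;S_k)$ the subtracted term is $0$. *)

(* Defs.v *)
From HB Require Import structures.
From mathcomp Require Import all_boot all_order all_algebra.
From mathcomp Require Import all_classical all_reals all_analysis.
Set Implicit Arguments. Unset Strict Implicit. Unset Printing Implicit Defensive.
Import Order.TTheory GRing.Theory Num.Theory.
Import numFieldNormedType.Exports.
Local Open Scope classical_set_scope.
Local Open Scope ring_scope.

Definition dotv (R : realType) (n : nat) (u v : 'rV[R]_n) : R :=
  \sum_(i < n) u ord0 i * v ord0 i.
Definition sqnorm (R : realType) (n : nat) (u : 'rV[R]_n) : R := dotv u u.

Definition convex_setv (R : realType) (n : nat) (X : set 'rV[R]_n) : Prop :=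
  forall x y (t : R), X x -> X y -> 0 <= t <= 1 ->
    X (t *: x + (1 - t) *: y).

(* convex function R^n -> R (real-valued, hence automatically closed) *)
Definition convex_fun (R : realType) (n : nat) (h : 'rV[R]_n -> R) : Prop :=
  forall x y (t : R), 0 <= t <= 1 ->
    h (t *: x + (1 - t) *: y) <= t * h x + (1 - t) * h y.

Definition subgrad (R : realType) (n : nat) (h : 'rV[R]_n -> R) (x g : 'rV[R]_n)
  : Prop := forall y, h x + dotv g (y - x) <= h y.

Definition subdifferentiable_on (R : realType) (n : nat) (h : 'rV[R]_n -> R)
  (X : set 'rV[R]_n) : Prop := forall x, X x -> exists g, subgrad h x g.

Definition infX (R : realType) (n : nat) (h : 'rV[R]_n -> R) (X : set 'rV[R]_n)
  : \bar R := ereal_inf [set (h z)%:E | z in X].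

Definition is_argmin (R : realType) (n : nat) (h : 'rV[R]_n -> \bar R)
  (X : set 'rV[R]_n) (x : 'rV[R]_n) : Prop :=
  X x /\ forall y, X y -> (h x <= h y)%E.

Definition is_argminR (R : realType) (n : nat) (h : 'rV[R]_n -> R)
  (X : set 'rV[R]_n) (x : 'rV[R]_n) : Prop :=
  X x /\ forall y, X y -> h x <= h y.

Definition expectedF d (T : measurableType d) (R : realType) (n : nat)
  (P : probability T R) (f : 'rV[R]_n -> T -> R) (x : 'rV[R]_n) : \bar R :=
  (\int[P]_s (f x s)%:E)%E.

Definition mutually_independent d d' (Om : measurableType d) (T : measurableType d')
  (R : realType) (Q : probability Om R) (S : nat -> Om -> T) : Prop :=
  forall (I : seq nat) (A : nat -> set T), uniq I ->
    (forall i, measurable (A i)) ->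
    Q (\big[setI/setT]_(i <- I) (S i @^-1` A i)) =
    (\prod_(i <- I) Q (S i @^-1` A i))%E.

Definition iid_with_law d d' (Om : measurableType d) (T : measurableType d')
  (R : realType) (Q : probability Om R) (P : probability T R)
  (S : nat -> Om -> T) : Prop :=
  (forall k, measurable_fun setT (S k)) /\
  (forall k A, measurable A -> Q (S k @^-1` A) = P A) /\
  mutually_independent Q S.

(* Main.v *)
Require Import Defs.
From HB Require Import structures.
From mathcomp Require Import all_boot all_order all_algebra.
From mathcomp Require Import all_classical all_reals all_analysis.
From mathcomp Require Import ring lra.
Import Order.TTheory GRing.Theory Num.Theory.
Import numFieldNormedType.Exports.
Local Open Scope classical_set_scope.
Local Open Scope ring_scope.
Section Alg.
Variables (R : realType) (n : nat).
Implicit Types (u v w : 'rV[R]_n).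

Lemma dotvC u v : dotv u v = dotv v u.
Proof. by apply: eq_bigr => i _; rewrite mulrC. Qed.
Lemma dotvDl u v w : dotv (u + v) w = dotv u w + dotv v w.
Proof. rewrite /dotv -big_split; apply: eq_bigr => i _; rewrite !mxE mulrDl. done. Qed.
Lemma dotvNl u w : dotv (- u) w = - dotv u w.
Proof. rewrite /dotv -sumrN; apply: eq_bigr => i _; rewrite !mxE mulNr. done. Qed.
Lemma dotvZl a u w : dotv (a *: u) w = a * dotv u w.
Proof. rewrite /dotv mulr_sumr; apply: eq_bigr => i _; rewrite mxE; ring. Qed.
Lemma dotvBl u v w : dotv (u - v) w = dotv u w - dotv v w.
Proof. by rewrite dotvDl dotvNl. Qed.
Lemma dotvDr u v w : dotv w (u + v) = dotv w u + dotv w v.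
Proof. by rewrite dotvC dotvDl !(dotvC w). Qed.
Lemma dotvBr u v w : dotv w (u - v) = dotv w u - dotv w v.
Proof. by rewrite dotvC dotvBl !(dotvC w). Qed.
Lemma dotvZr a u w : dotv w (a *: u) = a * dotv w u.
Proof. by rewrite dotvC dotvZl dotvC. Qed.
Lemma sqnorm_ge0 u : 0 <= sqnorm u.
Proof. by apply: sumr_ge0 => i _; rewrite -expr2 sqr_ge0. Qed.
Lemma sqnormD u v : sqnorm (u + v) = sqnorm u + 2 * dotv u v + sqnorm v.
Proof. rewrite /sqnorm dotvDl !dotvDr (dotvC v u); ring. Qed.
End Alg.

Lemma sqnormZ (R : realType) n (t : R) (d : 'rV[R]_n) : sqnorm (t *: d) = t ^+ 2 * sqnorm d.
Proof. by rewrite /sqnorm dotvZl dotvZr mulrA expr2. Qed.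

Lemma ge0_small (R : realType) (A S : R) : 0 <= S ->
  (forall t, 0 < t -> t <= 1 -> 0 <= A + t * S / 2) -> 0 <= A.
Proof.
move=> S0 H; case: (leP 0 A) => // A0.
have [S00|Sp] := eqVneq S 0.
  by have := H 1 ltr01 (lexx _); rewrite S00; lra.
have Sp' : 0 < S by rewrite lt_neqAle eq_sym Sp S0.
set t := Num.min 1 (- A / S).
have tp : 0 < t by rewrite lt_min ltr01 /= divr_gt0 // oppr_gt0.
have t1 : t <= 1 by rewrite ge_min lexx.
have tA : t <= - A / S by rewrite ge_min lexx orbT.
have := H t tp t1.
have : t * S <= - A by rewrite -(ler_pdivlMr _ _ Sp').
lra.
Qed.

Lemma three_point (R : realType) n (X : set 'rV[R]_n) (h : 'rV[R]_n -> R)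
  z xp y (a : R) : convex_setv X -> convex_fun h -> 0 < a ->
  is_argminR (fun y => h y + (2 * a)^-1 * sqnorm (y - z)) X xp -> X y ->
  dotv (xp - z) (xp - y) <= a * (h y - h xp).
Proof.
move=> cX ch a0 [Xxp Hmin] Xy.
set d := y - xp; set u := xp - z.
have -> : xp - y = - d by rewrite /d opprB.
rewrite dotvC dotvNl dotvC.
suff : 0 <= a * (h y - h xp) + dotv u d by lra.
apply: (@ge0_small _ _ (sqnorm d)); first exact: sqnorm_ge0.
move=> t t0 t1.
have t01 : 0 <= t <= 1 by rewrite t1 ltW.
have := Hmin _ (cX _ _ _ Xy Xxp t01).
have -> : t *: y + (1 - t) *: xp - z = u + t *: d.
  by apply/rowP => j; rewrite !mxE; ring.
rewrite [sqnorm (_ + t *: d)]sqnormD sqnormZ dotvZr.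
have := ch y xp t t01.
set hy := h y; set hp := h xp; set ht := h _.
set D := dotv u d; set Su := sqnorm u; set S := sqnorm d.
move=> Hc Hm.
have K : 0 <= t * (hy - hp) + (2 * a)^-1 * (2 * (t * D) + t ^+ 2 * S).
  have e : (2 * a)^-1 * (Su + 2 * (t * D) + t ^+ 2 * S) =
     (2 * a)^-1 * Su + (2 * a)^-1 * (2 * (t * D) + t ^+ 2 * S) by ring.
  rewrite e in Hm; lra.
have e2 : t * (a * (hy - hp) + D + t * S / 2) =
   a * (t * (hy - hp) + (2 * a)^-1 * (2 * (t * D) + t ^+ 2 * S)).
  by field; rewrite lt0r_neq0.
have : 0 <= t * (a * (hy - hp) + D + t * S / 2) by rewrite e2 mulr_ge0 // ltW.
by rewrite pmulr_rge0.
Qed.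

Lemma step (R : realType) n (X : set 'rV[R]_n) (h fs : 'rV[R]_n -> R)
  xk xp xs (a : R) : convex_setv X -> convex_fun h -> 0 < a -> X xk -> X xs ->
  (exists g, subgrad h xk g) -> h xk = fs xk -> (forall y, h y <= fs y) ->
  (forall y, (infX fs X <= (h y)%:E)%E) -> infX fs X = (fs xs)%:E ->
  is_argminR (fun y => h y + (2 * a)^-1 * sqnorm (y - xk)) X xp ->
  exists2 g, subgrad fs xk g & let D := fs xk - fs xs in
   sqnorm (xp - xs) / 2 <= sqnorm (xk - xs) / 2 - D / 2 * Num.min a (D / sqnorm g).
Proof.
move=> cX ch a0 Xk Xs [g Hg] hk hle hinf hI Hmin.
exists g.
  by move=> y; have := Hg y; have := hle y; rewrite -hk; lra.
cbv zeta.
have fl : forall y, fs xs <= h y by move=> y; have := hinf y; rewrite hI lee_fin.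
have D0 : fs xs <= fs xk.
  have : (infX fs X <= (fs xk)%:E)%E by apply: ereal_inf_lbound; exists xk.
  by rewrite hI lee_fin.
have TP := @three_point R n X h xk xp xs a cX ch a0 Hmin Xs.
have sub := Hg (xp).
have e1 : sqnorm (xp - xs) = sqnorm (xk - xs) + 2 * dotv (xp - xk) (xp - xs) - sqnorm (xp - xk).
  have -> : xp - xs = (xk - xs) + (xp - xk) by apply/rowP => j; rewrite !mxE; ring.
  rewrite sqnormD [dotv (xp - xk) _]dotvDr [dotv (xp - xk) (xk - xs)]dotvC /sqnorm; ring.
set D := fs xk - fs xs.
set G := sqnorm g.
set mu := Num.min a (D / G).
have G0 : 0 <= G by exact: sqnorm_ge0.
have mu0 : 0 <= mu by rewrite le_min ltW //= divr_ge0 // /D subr_ge0.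
have mua : mu <= a by rewrite ge_min lexx.
have muG : mu * G <= D.
  have [->|Gn] := eqVneq G 0; first by rewrite mulr0 /D subr_ge0.
  have Gp : 0 < G by rewrite lt_neqAle eq_sym Gn G0.
  by rewrite -ler_pdivlMr // ge_min lexx orbT.
have sq : 0 <= sqnorm ((xp - xk) + mu *: g) by exact: sqnorm_ge0.
rewrite sqnormD sqnormZ dotvZr -/G in sq.
rewrite (@dotvC R n g) in sub.
have fxp := fl xp; have hxs := hle xs.
have P0 : 0 <= a * (fs xs - h xs) by apply: mulr_ge0; lra.
have P1 : 0 <= (a - mu) * (h xp - fs xs) by apply: mulr_ge0; lra.
have P2 : 0 <= mu * (h xp - fs xk - dotv (xp - xk) g) by apply: mulr_ge0; lra.
have P3 : 0 <= mu * (D - mu * G) by apply: mulr_ge0; lra.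
rewrite e1; rewrite /D in P3 *; nra.
Qed.
Theorem lemma5 (R : realType) (n : nat)
  (dT : measure_display) (T : measurableType dT) (P : probability T R)
  (dO : measure_display) (Om : measurableType dO) (Q : probability Om R)
  (X : set 'rV[R]_n)
  (f : 'rV[R]_n -> T -> R)
  (fm : 'rV[R]_n -> 'rV[R]_n -> T -> R)
  (alpha : nat -> R) (S : nat -> Om -> T) (x : nat -> Om -> 'rV[R]_n) :
  closed X -> convex_setv X ->
  (forall s, convex_fun (f ^~ s) /\ subdifferentiable_on (f ^~ s) X) ->
  (forall y, X y -> measurable_fun setT (f y)) ->
  (forall y, X y -> P.-integrable setT (fun s => (f y s)%:E)) ->
  (* F is easy to optimize *)
  (forall xs, is_argmin (expectedF P f) X xs ->
     {ae P, forall s, infX (f ^~ s) X = (f xs s)%:E}) ->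
  (* model conditions (C.i)-(C.iii) *)
  (forall z s, X z -> convex_fun (fun y => fm z y s) /\
                      subdifferentiable_on (fun y => fm z y s) X) ->
  (forall z s, X z -> fm z z s = f z s /\ (forall y, fm z y s <= f y s)) ->
  (forall z s, X z -> forall y, infX (f ^~ s) X <= (fm z y s)%:E)%E ->
  (* iteration *)
  (forall w, X (x 0%N w)) ->
  (forall k, 0 < alpha k) ->
  iid_with_law Q P S ->
  (forall k w, is_argminR
     (fun y => fm (x k w) y (S k w) + (2 * alpha k)^-1 * sqnorm (y - x k w))
     X (x k.+1 w)) ->
  forall xs, is_argmin (expectedF P f) X xs ->
  {ae Q, forall w, forall k,
     exists2 g, subgrad (f ^~ (S k w)) (x k w) g &
     let D := f (x k w) (S k w) - f xs (S k w) in
     sqnorm (x k.+1 w - xs) / 2 <=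
       sqnorm (x k w - xs) / 2 - D / 2 * Num.min (alpha k) (D / sqnorm g)}.
Proof.
move=> cl cX hf fmeas fint easy hC1 hC2 hC3 X0 apos iid Hit xs Hxs.
have Xk : forall k w, X (x k w) by elim => [|k IH] w //; case: (Hit k w).
have [N [mN PN0 HN]] := easy xs Hxs.
case: iid => Smeas [Slaw _].
have Hneg : Q.-negligible (\bigcup_k (S k @^-1` N)).
  apply: negligible_bigcup => k; exists (S k @^-1` N); split => //.
    by have := Smeas k measurableT N mN; rewrite setTI.
  by rewrite -PN0; exact: (Slaw k N mN).
apply: (negligibleS _ Hneg) => w /= nP.
apply: contrapT => nB; apply: nP => k.
have nk : ~ N (S k w) by move=> Nk; apply: nB; exists k.
have gk : infX (f ^~ (S k w)) X = (f xs (S k w))%:E.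
  by apply: contrapT => ne; apply: nk; apply: HN.
have [c1 s1] := hC1 (x k w) (S k w) (Xk k w).
have [c2 c3] := hC2 (x k w) (S k w) (Xk k w).
exact: (@step R n X (fun y => fm (x k w) y (S k w)) (f ^~ (S k w)) (x k w) (x k.+1 w) xs (alpha k)
  cX c1 (apos k) (Xk k w) Hxs.1 (s1 _ (Xk k w)) c2 c3 (hC3 _ _ (Xk k w)) gk (Hit k w)).
Qed.
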